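(* Let $\mathbb{K}$ be a field of characteristic not $2,3$ and let $\mathbb{T}=\mathbb{K}^3$ with multiplication $$x\circ y=\Big(x_1y_1-\tfrac12x_2y_3-\tfrac12x_3y_2,\ x_2y_2-\tfrac12x_1y_3-\tfrac12x_3y_1,\ x_3y_3-\tfrac12x_1y_2-\tfrac12x_2y_1\Big).$$ Then $\mathbb{T}$ is isospectral. If $\mathbb{K}$ is infinite, $\mathbb{T}$ is non-generic. The set of nonzero idempotents of $\mathbb{T}$ is $$\{(x_1,x_2,x_3)\in\mathbb{K}^3:\ x_1^2+x_2^2+x_3^2=x_1+x_2+x_3=1\},$$ and every nonzero idempotent has spectrum $\{1,-\tfrac12,\tfrac12\}$.
   Context: For an idempotent $c$, its spectrum is the multiset of eigenvalues of $L_c:x\mapsto c\circ x$. An algebra is isospectral if all its nonzero idempotents have the same spectrum. A commutative algebra of dimension $n$ is generic if (over an algebraic closure / complexification) it has exactly $2^n$ distinct idempotents (including $0$). *)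

(* Defs.v *)
From HB Require Import structures.
From mathcomp Require Import all_boot all_order all_algebra all_field.
Set Implicit Arguments. Unset Strict Implicit. Unset Printing Implicit Defensive.
Import Order.TTheory GRing.Theory Num.Theory.
Local Open Scope ring_scope.

Definition i0 : 'I_3 := @Ordinal 3 0 isT.
Definition i1 : 'I_3 := @Ordinal 3 1 isT.
Definition i2 : 'I_3 := @Ordinal 3 2 isT.

Definition tmul (R : fieldType) (x y : 'rV[R]_3) : 'rV[R]_3 :=
  let x1 := x 0 i0 in let x2 := x 0 i1 in let x3 := x 0 i2 in
  let y1 := y 0 i0 in let y2 := y 0 i1 in let y3 := y 0 i2 in
  \row_(k < 3)
    (if k == i0 then x1 * y1 - 2^-1 * x2 * y3 - 2^-1 * x3 * y2
     else if k == i1 then x2 * y2 - 2^-1 * x1 * y3 - 2^-1 * x3 * y1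
     else x3 * y3 - 2^-1 * x1 * y2 - 2^-1 * x2 * y1).

Definition is_idempotent (R : fieldType) (c : 'rV[R]_3) : Prop := tmul c c = c.

Definition Lmat (R : fieldType) (c : 'rV[R]_3) : 'M[R]_3 :=
  \matrix_(i < 3, j < 3) (tmul c (delta_mx 0 j)) 0 i.

(* The spectrum of an idempotent c is the multiset of eigenvalues of L_c,
   i.e. it is encoded by the characteristic polynomial of L_c. *)
Definition spectrum_poly (R : fieldType) (c : 'rV[R]_3) : {poly R} :=
  char_poly (Lmat c).

Definition isospectral (R : fieldType) : Prop :=
  forall c d : 'rV[R]_3, is_idempotent c -> c != 0 ->
    is_idempotent d -> d != 0 -> spectrum_poly c = spectrum_poly d.

Definition has_2n_idempotents (L : closedFieldType) : Prop :=
  exists s : seq 'rV[L]_3,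
    [/\ uniq s, size s = (2 ^ 3)%N & forall x, x \in s <-> is_idempotent x].

(* T over K is generic if over an algebraic closure (any algebraically
   closed extension L of K) it has exactly 2^3 idempotents. *)
Definition nongeneric (K : fieldType) : Prop :=
  forall (L : closedFieldType) (f : {rmorphism K -> L}), ~ has_2n_idempotents L.

Definition infinite_field (K : fieldType) : Prop :=
  forall s : seq K, exists x : K, x \notin s.

(* Main.v *)
Require Import Defs.
From HB Require Import structures.
From mathcomp Require Import all_boot all_order all_algebra all_field.
From mathcomp Require Import ring.
Import Order.TTheory GRing.Theory Num.Theory.
Local Open Scope ring_scope.
Set Implicit Arguments. Unset Strict Implicit.

Ltac fixidx1 t :=
  lazymatch t with
  | i0 => fail | i1 => fail | i2 => fail
  | _ => let v := eval compute in (nat_of_ord t) in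
    lazymatch v with
    | 0%N => rewrite (_ : t = i0); last by apply/val_inj
    | 1%N => rewrite (_ : t = i1); last by apply/val_inj
    | 2%N => rewrite (_ : t = i2); last by apply/val_inj
    end
  end.
Ltac fixidx A := repeat match goal with
  | |- context [@fun_of_matrix _ _ _ A ?i ?j] => fixidx1 i
  | |- context [@fun_of_matrix _ _ _ A ?i ?j] => fixidx1 j
  end.

Lemma det3 (R : comNzRingType) (A : 'M[R]_3) : \det A =
  A i0 i0 * (A i1 i1 * A i2 i2 - A i1 i2 * A i2 i1)
  - A i0 i1 * (A i1 i0 * A i2 i2 - A i1 i2 * A i2 i0)
  + A i0 i2 * (A i1 i0 * A i2 i1 - A i1 i1 * A i2 i0).
Proof.
rewrite (expand_det_row _ i0) !big_ord_recl big_ord0 /cofactor.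
rewrite !(expand_det_row _ ord0) !big_ord_recl !big_ord0 /cofactor !det_mx11 !mxE /=.
fixidx A.

rewrite /bump /=. rewrite !expr0 !expr1 ?expr2. ring.
Qed.

Lemma e01 : (i0 == i1) = false. Proof. by []. Qed.
Lemma e02 : (i0 == i2) = false. Proof. by []. Qed.
Lemma e10 : (i1 == i0) = false. Proof. by []. Qed.
Lemma e12 : (i1 == i2) = false. Proof. by []. Qed.
Lemma e20 : (i2 == i0) = false. Proof. by []. Qed.
Lemma e21 : (i2 == i1) = false. Proof. by []. Qed.
Definition eords := (e01, e02, e10, e12, e20, e21).

Lemma spec_formula (K : fieldType) (c : 'rV[K]_3) :
  let c1 := c 0 i0 in let c2 := c 0 i1 in let c3 := c 0 i2 in let h : K := 2^-1 in
  spectrum_poly c = 'X^3 - (c1+c2+c3)%:P*'X^2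
    + (c1*c2+c1*c3+c2*c3 - h*h*(c1*c1+c2*c2+c3*c3))%:P*'X
    - (c1*c2*c3 - h*h*(c1*c1*c1+c2*c2*c2+c3*c3*c3) - (h*h*h+h*h*h)*c1*c2*c3)%:P.
Proof.
move=> c1 c2 c3 h.
rewrite /spectrum_poly /char_poly det3 /char_poly_mx !mxE /=.
rewrite !mulr1 !mulr0 !subr0 !sub0r. rewrite ?mulr0n ?mulr1n ?mulrn0 ?mulr1n. rewrite /c1 /c2 /c3 /h. rewrite !(polyCN, polyCM, polyCD, polyCB). ring.

Qed.

Lemma ord3 (k : 'I_3) : k = i0 \/ k = i1 \/ k = i2.
Proof.
case: k => [[|[|[|k]]] Hk]; [left|right;left|right;right|by []]; exact/val_inj.
Qed.

Lemma zero_row (K : fieldType) (c : 'rV[K]_3) :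
  c 0 i0 = 0 -> c 0 i1 = 0 -> c 0 i2 = 0 -> c = 0.
Proof.
move=> a b d; apply/rowP => k; rewrite mxE.
by case: (ord3 k) => [->|[->|->]].
Qed.

Lemma idem_iff (K : fieldType) (c : 'rV[K]_3) :
  is_idempotent c <->
  [/\ c 0 i0 * c 0 i0 - 2^-1 * c 0 i1 * c 0 i2 - 2^-1 * c 0 i2 * c 0 i1 = c 0 i0,
      c 0 i1 * c 0 i1 - 2^-1 * c 0 i0 * c 0 i2 - 2^-1 * c 0 i2 * c 0 i0 = c 0 i1
    & c 0 i2 * c 0 i2 - 2^-1 * c 0 i0 * c 0 i1 - 2^-1 * c 0 i1 * c 0 i0 = c 0 i2].
Proof.
rewrite /is_idempotent /tmul; split.
  move/rowP => H; split.
  - by move: (H i0); rewrite !mxE.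
  - by move: (H i1); rewrite !mxE.
  - by move: (H i2); rewrite !mxE.
case=> E1 E2 E3; apply/rowP => k; rewrite !mxE.
by case: (ord3 k) => [->|[->|->]].
Qed.

Section Core.
Variable K : fieldType.
Hypothesis h2 : 2%:R != 0 :> K.

Lemma half_simp (p q r : K) : p - 2^-1 * q * r - 2^-1 * r * q = p - q * r.
Proof.
have hh : (2^-1 + 2^-1 : K) = 1.
  by rewrite -[RHS](mulVf h2); ring.
have -> : p - 2^-1 * q * r - 2^-1 * r * q = p - (2^-1 + 2^-1) * (q * r) by ring.
by rewrite hh mul1r.
Qed.

Lemma core_bwd (x y z : K) :
  x ^+ 2 + y ^+ 2 + z ^+ 2 = 1 -> x + y + z = 1 ->
  [/\ x * x - y * z = x, y * y - x * z = y & z * z - x * y = z].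
Proof.
move=> hq hs.
have gen : forall a b d : K, a + b + d = 1 -> a ^+ 2 + b ^+ 2 + d ^+ 2 = 1 ->
    a * a - b * d = a.
  move=> a b d sa qa.
  have : 2 * (a * a - b * d - a) =
     (a ^+ 2 + b ^+ 2 + d ^+ 2 - 1) + (a + b + d - 1) * (2 * a - (a + b + d) - 1)
    by ring.
  rewrite sa qa !subrr mul0r addr0 => /eqP; rewrite mulf_eq0 (negbTE h2) /=.
  by rewrite subr_eq0 => /eqP.
split.
- exact: gen.
- apply: gen; first by rewrite -hs; ring.
  by rewrite -hq; ring.
- rewrite (_ : x * y = y * x); last by ring.
  apply: gen; first by rewrite -hs; ring.
  by rewrite -hq; ring.
Qed.

Hypothesis h3 : 3%:R != 0 :> K.

Lemma core_fwd (x y z : K) :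
  x * x - y * z = x -> y * y - x * z = y -> z * z - x * y = z ->
  ~ (x = 0 /\ y = 0 /\ z = 0) ->
  x ^+ 2 + y ^+ 2 + z ^+ 2 = 1 /\ x + y + z = 1.
Proof.
move=> E1 E2 E3 nz.
have Z1 : x * x - y * z - x = 0 by rewrite E1 subrr.
have Z2 : y * y - x * z - y = 0 by rewrite E2 subrr.
have Z3 : z * z - x * y - z = 0 by rewrite E3 subrr.
case: (eqVneq (x + y + z) 1) => hs.
  split => //.
  have : 3 * (x ^+ 2 + y ^+ 2 + z ^+ 2 - 1) =
    2 * ((x * x - y * z - x) + (y * y - x * z - y) + (z * z - x * y - z))
    + (x + y + z - 1) * (x + y + z + 3) by ring.
  rewrite Z1 Z2 Z3 hs subrr !addr0 mulr0 mul0r addr0 => /eqP.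
  by rewrite mulf_eq0 (negbTE h3) /= subr_eq0 => /eqP.
exfalso; apply: nz.
have hs' : x + y + z - 1 != 0 by rewrite subr_eq0.
have D12 : (x - y) * (x + y + z - 1) = 0.
  have -> : (x - y) * (x + y + z - 1) =
     (x * x - y * z - x) - (y * y - x * z - y) by ring.
  by rewrite Z1 Z2 subrr.
have D23 : (y - z) * (x + y + z - 1) = 0.
  have -> : (y - z) * (x + y + z - 1) =
     (y * y - x * z - y) - (z * z - x * y - z) by ring.
  by rewrite Z2 Z3 subrr.
move/eqP: D12; rewrite mulf_eq0 (negbTE hs') orbF subr_eq0 => /eqP exy.
move/eqP: D23; rewrite mulf_eq0 (negbTE hs') orbF subr_eq0 => /eqP eyz.
subst x y.
have : z = 0 by rewrite -E3 subrr.
by move=> ->.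
Qed.

End Core.

Lemma charac (K : fieldType) (h2 : 2%:R != 0 :> K) (h3 : 3%:R != 0 :> K)
  (x : 'rV[K]_3) :
  (is_idempotent x /\ x != 0) <->
  (x 0 i0 ^+ 2 + x 0 i1 ^+ 2 + x 0 i2 ^+ 2 = 1 /\ x 0 i0 + x 0 i1 + x 0 i2 = 1).
Proof.
rewrite idem_iff !half_simp //; split.
  case=> [[E1 E2 E3] nz]; apply: core_fwd => //.
  by case=> a [b d]; move/eqP: nz; apply; apply: zero_row.
case=> hq hs; have [E1 E2 E3] := @core_bwd K h2 _ _ _ hq hs; split.
  by split.
apply/eqP => x0; move: hs; rewrite x0 !mxE !addr0 => /eqP.
by rewrite eq_sym oner_eq0.
Qed.

Lemma spec_val (K : fieldType) (h2 : 2%:R != 0 :> K) (h3 : 3%:R != 0 :> K)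
  (c : 'rV[K]_3) : is_idempotent c -> c != 0 ->
  spectrum_poly c = ('X - 1%:P) * ('X + (2^-1)%:P) * ('X - (2^-1)%:P).
Proof.
move=> ic nz; have [hq hs] := (charac h2 h3 c).1 (conj ic nz).
have := spec_formula c; rewrite /= => ->.
move: hq hs; set x := c 0 i0; set y := c 0 i1; set z := c 0 i2; set h : K := 2^-1.
move=> hq hs.
have E2 : x*y + x*z + y*z = 0.
  have : 2*(x*y+x*z+y*z) = (x+y+z)^+2 - (x^+2+y^+2+z^+2) by ring.
  rewrite hs hq expr1n subrr => /eqP; rewrite mulf_eq0 (negbTE h2) /= => /eqP //.
have Ha : x*y+x*z+y*z - h*h*(x*x+y*y+z*z) = -(h*h).
  have -> : x*x+y*y+z*z = x^+2+y^+2+z^+2 by ring.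
  by rewrite hq E2 mulr1 sub0r.
have hcub : 1 - 3*h*h - (h*h*h+h*h*h) = 0 :> K.
  by rewrite /h; field.
have Hd : (x*y*z - h*h*(x*x*x+y*y*y+z*z*z) - (h*h*h+h*h*h)*x*y*z) = -(h*h).
  have -> : (x*y*z - h*h*(x*x*x+y*y*y+z*z*z) - (h*h*h+h*h*h)*x*y*z) =
    x*y*z*(1 - 3*h*h - (h*h*h+h*h*h)) + h*h*(3*(x+y+z)*(x*y+x*z+y*z))
    + h*h*(1 - (x+y+z)^+3) - h*h by ring.
  rewrite hcub E2 hs expr1n subrr; ring.
rewrite hs Ha Hd !polyCN polyCM; ring.
Qed.

Lemma distinct_seq (K : fieldType) (inf : infinite_field K) n :
  exists ts : seq K, uniq ts /\ size ts = n.
Proof.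
elim: n => [|n [ts [u sz]]]; first by exists [::].
have [x hx] := inf ts; exists (x :: ts); by rewrite /= hx u sz.
Qed.

Lemma idem_exists (L : closedFieldType) (h2 : 2%:R != 0 :> L) (t : L) :
  exists c : 'rV[L]_3, is_idempotent c /\ c 0 i0 = t.
Proof.
have [y hy] := @solve_monicpoly L 2 (nth 0 [:: t*(1-t); 1-t]) isT.
rewrite !big_ord_recl big_ord0 /= in hy.
have hy' : y^+2 = t*(1-t) + (1-t)*y by rewrite hy /=; ring.
pose z := 1 - t - y.
exists (\row_(k<3) if k == i0 then t else if k == i1 then y else z).
split; last by rewrite mxE.
apply/idem_iff; rewrite !half_simp // !mxE /=.
have [||E1 E2 E3] := @core_bwd L h2 t y z; last by split.
  apply/eqP; rewrite -subr_eq0; apply/eqP.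
  transitivity (2*(y^+2 - (t*(1-t)+(1-t)*y))); first by rewrite /z; ring.
  by rewrite hy' subrr mulr0.
by rewrite /z; ring.
Qed.

Lemma nongen (K : fieldType) (h2 : 2%:R != 0 :> K) :
  infinite_field K -> nongeneric K.
Proof.
move=> inf L f [s [us ss hs]].
have h2L : 2%:R != 0 :> L by rewrite -(rmorph_nat f) fmorph_eq0.
have [ts [uts sts]] := distinct_seq inf 9.
have : exists u : seq 'rV[L]_3, map (fun c : 'rV[L]_3 => c 0 i0) u = map f ts /\
    forall c, c \in u -> is_idempotent c.
  elim: (map f ts) => [|t r [u [mu iu]]]; first by exists [::].
  have [c [ic ct]] := idem_exists h2L t.
  exists (c :: u); split; first by rewrite /= ct mu.
  move=> d; rewrite inE => /orP [/eqP -> //|]; exact: iu.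
case=> u [mu iu].
have uu : uniq u.
  apply: (@map_uniq _ _ (fun c : 'rV[L]_3 => c 0 i0)); rewrite mu map_inj_uniq //.
  exact: fmorph_inj.
have := uniq_leq_size uu (fun c hc => (hs c).2 (iu c hc)).
by rewrite -(size_map (fun c : 'rV[L]_3 => c 0 i0)) mu size_map sts ss.
Qed.

Theorem proposition9p6 (K : fieldType)
  (h2 : 2%:R != 0 :> K) (h3 : 3%:R != 0 :> K) :
  [/\ isospectral K,
      infinite_field K -> nongeneric K,
      (forall x : 'rV[K]_3,
         (is_idempotent x /\ x != 0) <->
         (x 0 i0 ^+ 2 + x 0 i1 ^+ 2 + x 0 i2 ^+ 2 = 1 /\
          x 0 i0 + x 0 i1 + x 0 i2 = 1))
    & (forall c : 'rV[K]_3, is_idempotent c -> c != 0 ->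
         spectrum_poly c = ('X - 1%:P) * ('X + (2^-1)%:P) * ('X - (2^-1)%:P))].
Proof.
split.
- by move=> c d ic nc id nd; rewrite !(spec_val h2 h3).
- exact: nongen.
- exact: charac.
- exact: spec_val.
Qed.
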